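(* Every $\mathrm{CAT}(0)$ group $G$ satisfies the quadratic radial isoperimetric inequality: there exist a finite presentation $G=\langle S\mid R\rangle$ and a constant $C>0$ such that for every word $w=s_1\cdots s_n\in F_S$ representing the identity $e$ of $G$, $$\mathrm{Area}(w)\leq C\sum_{i=1}^n\big(d_S(\bar w(i),e)+1\big),$$ where $\bar w(i)$ is the image in $G$ of $s_1\cdots s_i$.
   Context: A $\mathrm{CAT}(0)$ group is a group acting properly discontinuously and cocompactly by isometries on a proper geodesic $\mathrm{CAT}(0)$ metric space $(X,d)$, i.e. a geodesic metric space in which for every geodesic triangle $ABC$ with Euclidean comparison triangle $\bar A\bar B\bar C$ (same side lengths), every point $D$ on $BC$ with corresponding $\bar D$ on $\bar B\bar C$ ($d(B,D)=|\bar B\bar D|$) satisfies $d(A,D)\leq|\bar A\bar D|$. For a finite presentation $\langle S\mid R\rangle$ ($S$ finite, $S=S^{-1}$, $R\subset F_S$ finite), $d_S(a,b)=\min\{n:b^{-1}a=s_1\cdots s_n,\ s_i\in S\}$ is the word metric, and for $w\in F_S$ representing $e$, $\mathrm{Area}(w)$ is the smallest $k$ with $w=\prod_{i=1}^k v_ir_iv_i^{-1}$ in $F_S$, $v_i$ reduced words on $S$, $r_i^{\pm1}\in R$. *)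

(* Defs.v *)
From Stdlib Require Import Reals List Relations ClassicalEpsilon.
Import ListNotations.
Open Scope R_scope.

(* ---------- generic: least natural number satisfying P (0 if none) ---------- *)
Definition nat_min (P : nat -> Prop) : nat :=
  match excluded_middle_informative
          (exists n, P n /\ forall m, P m -> (n <= m)%nat) with
  | left H => proj1_sig (constructive_indefinite_description _ H)
  | right _ => 0%nat
  end.

Definition is_metric {X : Type} (d : X -> X -> R) : Prop :=
  (forall x y, 0 <= d x y) /\
  (forall x y, d x y = 0 <-> x = y) /\
  (forall x y, d x y = d y x) /\
  (forall x y z, d x z <= d x y + d y z).

Definition open_set {X : Type} (d : X -> X -> R) (U : X -> Prop) : Prop :=
  forall x, U x -> exists r, 0 < r /\ forall y, d x y < r -> U y.

Definition compact_set {X : Type} (d : X -> X -> R) (K : X -> Prop) : Prop :=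
  forall (I : Type) (U : I -> X -> Prop),
    (forall i, open_set d (U i)) ->
    (forall x, K x -> exists i, U i x) ->
    exists l : list I, forall x, K x -> exists i, In i l /\ U i x.

Definition proper_space {X : Type} (d : X -> X -> R) : Prop :=
  forall x r, compact_set d (fun y => d x y <= r).

Definition geodesic_from {X : Type} (d : X -> X -> R) (x y : X)
  (gam : R -> X) : Prop :=
  gam 0 = x /\ gam (d x y) = y /\
  forall s t, 0 <= s <= d x y -> 0 <= t <= d x y ->
    d (gam s) (gam t) = Rabs (s - t).

Definition geodesic_space {X : Type} (d : X -> X -> R) : Prop :=
  forall x y, exists gam, geodesic_from d x y gam.

Definition eucl (p q : R * R) : R :=
  sqrt ((fst p - fst q) ^ 2 + (snd p - snd q) ^ 2).

Definition on_segment (b c p : R * R) : Prop :=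
  exists l, 0 <= l <= 1 /\
    p = ((1 - l) * fst b + l * fst c, (1 - l) * snd b + l * snd c).

(* CAT(0) comparison inequality: for every geodesic triangle ABC (side BC
   given by the geodesic gam), every point D = gam t of BC and every
   Euclidean comparison triangle with comparison point Dbar on BbarCbar,
   d(A,D) <= |Abar Dbar|. *)
Definition CAT0 {X : Type} (d : X -> X -> R) : Prop :=
  forall (A B C : X) (gam : R -> X), geodesic_from d B C gam ->
  forall t, 0 <= t <= d B C ->
  forall Ab Bb Cb Db : R * R,
    eucl Ab Bb = d A B -> eucl Bb Cb = d B C -> eucl Ab Cb = d A C ->
    on_segment Bb Cb Db -> eucl Bb Db = d B (gam t) ->
    d A (gam t) <= eucl Ab Db.

Record is_group {G : Type} (mul : G -> G -> G) (one : G) (inv : G -> G) : Prop := {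
  grp_assoc : forall a b c, mul a (mul b c) = mul (mul a b) c;
  grp_mul1g : forall a, mul one a = a;
  grp_mulg1 : forall a, mul a one = a;
  grp_mulVg : forall a, mul (inv a) a = one;
  grp_mulgV : forall a, mul a (inv a) = one }.

Definition finite_set {G : Type} (P : G -> Prop) : Prop :=
  exists l : list G, forall g, P g -> In g l.

Record isometric_action {G X : Type} (mul : G -> G -> G) (one : G)
  (d : X -> X -> R) (act : G -> X -> X) : Prop := {
  act_one : forall x, act one x = x;
  act_mul : forall g h x, act (mul g h) x = act g (act h x);
  act_isom : forall g x y, d (act g x) (act g y) = d x y }.

Definition properly_discontinuous {G X : Type} (d : X -> X -> R)
  (act : G -> X -> X) : Prop :=
  forall K, compact_set d K ->
    finite_set (fun g => exists x, K x /\ K (act g x)).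

Definition cocompact {G X : Type} (d : X -> X -> R) (act : G -> X -> X) : Prop :=
  exists K, compact_set d K /\ forall x, exists g y, K y /\ x = act g y.

Section Free.
Context {G : Type} (mul : G -> G -> G) (one : G) (inv : G -> G).

(* a letter (s, false) is the generator s, (s, true) its formal inverse s^-1 *)
Definition letter := (G * bool)%type.
Definition flip (a : letter) : letter := (fst a, negb (snd a)).
Definition inv_word (w : list letter) : list letter := rev (map flip w).

Definition word_on (S : list G) (w : list letter) : Prop :=
  forall a, In a w -> In (fst a) S.

Definition reduced (w : list letter) : Prop :=
  forall p q a, w <> p ++ a :: flip a :: q.

Definition free_step (u v : list letter) : Prop :=
  exists p q a, u = p ++ a :: flip a :: q /\ v = p ++ q.

Definition free_eq : list letter -> list letter -> Prop :=
  clos_refl_sym_trans _ free_step.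

Definition eval_letter (a : letter) : G :=
  if snd a then inv (fst a) else fst a.
Definition eval_word (w : list letter) : G :=
  fold_right (fun a g => mul (eval_letter a) g) one w.

Definition prodG (l : list G) : G := fold_right mul one l.

Definition pos_word (l : list G) : list letter := map (fun s => (s, false)) l.

Definition conj_prod (l : list (list letter * list letter * bool)) : list letter :=
  concat (map (fun x : list letter * list letter * bool =>
                 let '(v, r, b) := x in
                 v ++ (if b then inv_word r else r) ++ inv_word v) l).

Definition area_witness (S : list G) (Rl : list (list letter))
  (w : list letter) (k : nat) : Prop :=
  exists l : list (list letter * list letter * bool),
    length l = k /\
    (forall v r b, In (v, r, b) l -> word_on S v /\ reduced v /\ In r Rl) /\
    free_eq w (conj_prod l).

Definition Area (S : list G) (Rl : list (list letter)) (w : list letter) : nat :=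
  nat_min (area_witness S Rl w).

Definition dS (S : list G) (a b : G) : nat :=
  nat_min (fun n => exists l : list G,
    length l = n /\ (forall s, In s l -> In s S) /\ prodG l = mul (inv b) a).

(* G = < S | R > via the natural map F_S -> G *)
Definition finite_presentation (S : list G) (Rl : list (list letter)) : Prop :=
  (forall s, In s S -> In (inv s) S) /\
  (forall r, In r Rl -> word_on S r /\ eval_word r = one) /\
  (forall g, exists l : list G, (forall s, In s l -> In s S) /\ prodG l = g) /\
  (forall u, word_on S u -> eval_word u = one ->
     exists k, area_witness S Rl u k).

Definition radial_sum (S : list G) (w : list G) : R :=
  fold_right Rplus 0
    (map (fun i => INR (dS S (prodG (firstn i w)) one) + 1)
         (seq 1 (length w))).
End Free.

(* Main.v *)
Require Import Defs.
From Stdlib Require Import Reals List.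
From Stdlib Require Import Lra Lia Psatz Classical ClassicalEpsilon Arith Relations.
Import ListNotations.
Open Scope R_scope.

Lemma nat_min_spec (P : nat -> Prop) :
  (exists n, P n) -> P (nat_min P) /\ forall m, P m -> (nat_min P <= m)%nat.
Proof.
  intros [n Hn].
  assert (Hex : exists n, P n /\ forall m, P m -> (n <= m)%nat).
  { revert Hn. induction n as [n IH] using lt_wf_ind. intros Hn.
    destruct (classic (exists k, (k < n)%nat /\ P k)) as [[k [Hk Pk]]|Hno].
    - exact (IH k Hk Pk).
    - exists n. split; [exact Hn|]. intros m Pm.
      destruct (le_lt_dec n m) as [|Hlt]; [assumption|].
      exfalso. apply Hno. exists m. auto. }
  unfold nat_min. destruct excluded_middle_informative as [H|H].
  - destruct (constructive_indefinite_description _ H) as [x Hx]. simpl. exact Hx.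
  - contradiction.
Qed.

Section Alg.
Context {G : Type} (mul : G -> G -> G) (one : G) (inv : G -> G)
  (HG : is_group mul one inv).

Notation ltr := (G * bool)%type.

Lemma mul_assoc a b c : mul a (mul b c) = mul (mul a b) c.
Proof. apply (grp_assoc _ _ _ HG). Qed.
Lemma mul1g a : mul one a = a. Proof. apply (grp_mul1g _ _ _ HG). Qed.
Lemma mulg1 a : mul a one = a. Proof. apply (grp_mulg1 _ _ _ HG). Qed.
Lemma mulVg a : mul (inv a) a = one. Proof. apply (grp_mulVg _ _ _ HG). Qed.
Lemma mulgV a : mul a (inv a) = one. Proof. apply (grp_mulgV _ _ _ HG). Qed.

Lemma inv_unique x y : mul x y = one -> inv y = x.
Proof.
  intro H. rewrite <- (mul1g (inv y)), <- H, <- mul_assoc, mulgV, mulg1. reflexivity.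
Qed.
Lemma inv_inv a : inv (inv a) = a.
Proof. apply inv_unique. apply mulgV. Qed.
Lemma inv_mul a b : inv (mul a b) = mul (inv b) (inv a).
Proof.
  apply inv_unique. rewrite <- mul_assoc, (mul_assoc (inv a)), mulVg, mul1g, mulVg.
  reflexivity.
Qed.
Lemma inv_one : inv one = one.
Proof. apply inv_unique. apply mul1g. Qed.
Lemma mul_cancel a b c : mul (mul (inv a) b) (mul (inv b) c) = mul (inv a) c.
Proof.
  rewrite <- mul_assoc, (mul_assoc b), mulgV, mul1g. reflexivity.
Qed.
Lemma inv_ab a b : inv (mul (inv a) b) = mul (inv b) a.
Proof. rewrite inv_mul, inv_inv. reflexivity. Qed.

Lemma flip_flip (a : ltr) : flip (flip a) = a.
Proof. destruct a as [s b]; unfold flip; simpl; rewrite Bool.negb_involutive; reflexivity. Qed.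

Lemma inv_word_app (u v : list ltr) : inv_word (u ++ v) = inv_word v ++ inv_word u.
Proof. unfold inv_word. rewrite map_app, rev_app_distr. reflexivity. Qed.
Lemma inv_word_cons (a : ltr) u : inv_word (a :: u) = inv_word u ++ [flip a].
Proof. reflexivity. Qed.
Lemma inv_word_nil : inv_word (@nil ltr) = []. Proof. reflexivity. Qed.
Lemma inv_word_inv (u : list ltr) : inv_word (inv_word u) = u.
Proof.
  induction u as [|a u IH]; [reflexivity|].
  rewrite inv_word_cons, inv_word_app, IH. simpl. rewrite flip_flip. reflexivity.
Qed.
Lemma inv_word_length (u : list ltr) : length (inv_word u) = length u.
Proof. unfold inv_word. rewrite length_rev, length_map. reflexivity. Qed.
Lemma in_inv_word (u : list ltr) a : In a (inv_word u) -> In (flip a) u.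
Proof.
  unfold inv_word. intro H. apply in_rev in H. apply in_map_iff in H.
  destruct H as [x [<- Hx]]. rewrite flip_flip. exact Hx.
Qed.

Lemma word_on_app S (u v : list ltr) : word_on S u -> word_on S v -> word_on S (u ++ v).
Proof. intros Hu Hv a Ha. apply in_app_or in Ha. destruct Ha; auto. Qed.
Lemma word_on_inv S (u : list ltr) : word_on S u -> word_on S (inv_word u).
Proof. intros Hu a Ha. apply in_inv_word in Ha. apply Hu in Ha. destruct a; exact Ha. Qed.
Lemma word_on_nil S : word_on S (@nil ltr). Proof. intros a []. Qed.
Lemma word_on_pos S (l : list G) : (forall s, In s l -> In s S) -> word_on S (pos_word l).
Proof.
  intros H a Ha. unfold pos_word in Ha. apply in_map_iff in Ha.
  destruct Ha as [x [<- Hx]]. simpl. auto.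
Qed.

Lemma eval_app (u v : list ltr) :
  eval_word mul one inv (u ++ v) = mul (eval_word mul one inv u) (eval_word mul one inv v).
Proof.
  induction u as [|a u IH]; simpl.
  - rewrite mul1g. reflexivity.
  - rewrite IH, mul_assoc. reflexivity.
Qed.
Lemma eval_flip (a : ltr) : eval_letter inv (flip a) = inv (eval_letter inv a).
Proof. destruct a as [s []]; unfold eval_letter, flip; simpl; [rewrite inv_inv|]; reflexivity. Qed.
Lemma eval_inv (u : list ltr) :
  eval_word mul one inv (inv_word u) = inv (eval_word mul one inv u).
Proof.
  induction u as [|a u IH].
  - simpl. rewrite inv_one. reflexivity.
  - rewrite inv_word_cons, eval_app, IH. simpl. rewrite mulg1, eval_flip, inv_mul. reflexivity.
Qed.
Lemma prodG_app (u v : list G) : prodG mul one (u ++ v) = mul (prodG mul one u) (prodG mul one v).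
Proof.
  induction u as [|a u IH]; simpl.
  - rewrite mul1g. reflexivity.
  - rewrite IH, mul_assoc. reflexivity.
Qed.
Lemma eval_pos (l : list G) : eval_word mul one inv (pos_word l) = prodG mul one l.
Proof. induction l as [|a l IH]; simpl; [reflexivity|]. rewrite IH. reflexivity. Qed.
Lemma pos_word_app (u v : list G) : pos_word (u ++ v) = pos_word u ++ pos_word v.
Proof. unfold pos_word. apply map_app. Qed.
Lemma pos_word_length (u : list G) : length (pos_word u) = length u.
Proof. unfold pos_word. apply length_map. Qed.

Lemma fe_refl (u : list ltr) : free_eq u u. Proof. apply rst_refl. Qed.
Lemma fe_sym (u v : list ltr) : free_eq u v -> free_eq v u. Proof. apply rst_sym. Qed.
Lemma fe_trans (u v w : list ltr) : free_eq u v -> free_eq v w -> free_eq u w.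
Proof. apply rst_trans. Qed.

Lemma fe_app_l (p u v : list ltr) : free_eq u v -> free_eq (p ++ u) (p ++ v).
Proof.
  induction 1.
  - apply rst_step. destruct H as (p' & q & a & -> & ->).
    exists (p ++ p'), q, a. rewrite <- !app_assoc. split; reflexivity.
  - apply rst_refl.
  - apply rst_sym; assumption.
  - eapply rst_trans; eassumption.
Qed.
Lemma fe_app_r (q u v : list ltr) : free_eq u v -> free_eq (u ++ q) (v ++ q).
Proof.
  induction 1.
  - apply rst_step. destruct H as (p' & q' & a & -> & ->).
    exists p', (q' ++ q), a. rewrite <- !app_assoc. split; reflexivity.
  - apply rst_refl.
  - apply rst_sym; assumption.
  - eapply rst_trans; eassumption.
Qed.
Lemma fe_app (u u' v v' : list ltr) : free_eq u u' -> free_eq v v' -> free_eq (u ++ v) (u' ++ v').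
Proof. intros H1 H2. eapply fe_trans; [apply fe_app_r; exact H1|apply fe_app_l; exact H2]. Qed.

Lemma fe_inv (u v : list ltr) : free_eq u v -> free_eq (inv_word u) (inv_word v).
Proof.
  induction 1.
  - apply rst_step. destruct H as (p' & q & a & -> & ->).
    exists (inv_word q), (inv_word p'), a.
    rewrite !inv_word_app, !inv_word_cons. rewrite flip_flip.
    rewrite <- !app_assoc. simpl. split; reflexivity.
  - apply rst_refl.
  - apply rst_sym; assumption.
  - eapply rst_trans; eassumption.
Qed.

Lemma fe_cancel (w : list ltr) : free_eq (w ++ inv_word w) [].
Proof.
  induction w as [|a w IH]; [apply fe_refl|].
  rewrite inv_word_cons.
  apply fe_trans with ([a] ++ [] ++ [flip a]).
  - replace ((a :: w) ++ inv_word w ++ [flip a]) with ([a] ++ (w ++ inv_word w) ++ [flip a])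
      by (simpl; rewrite <- app_assoc; reflexivity).
    apply fe_app_l. apply fe_app_r. exact IH.
  - apply rst_step. exists [], [], a. simpl. split; reflexivity.
Qed.
Lemma fe_cancel_mid (x w y : list ltr) : free_eq (x ++ w ++ inv_word w ++ y) (x ++ y).
Proof.
  apply fe_app_l. rewrite app_assoc. apply (fe_app_r y _ []). apply fe_cancel.
Qed.
Lemma fe_cancel_mid' (x w y : list ltr) : free_eq (x ++ inv_word w ++ w ++ y) (x ++ y).
Proof.
  pose proof (fe_cancel_mid x (inv_word w) y) as H. rewrite inv_word_inv in H. exact H.
Qed.

Lemma fe_eval (u v : list ltr) : free_eq u v -> eval_word mul one inv u = eval_word mul one inv v.
Proof.
  induction 1.
  - destruct H as (p' & q & a & -> & ->).
    rewrite !eval_app. simpl. rewrite eval_flip, (mul_assoc (eval_letter inv a)), mulgV, mul1g. reflexivity.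
  - reflexivity.
  - auto.
  - congruence.
Qed.

Fixpoint red (w : list ltr) : list ltr :=
  match w with
  | [] => []
  | a :: w' =>
      match red w' with
      | b :: w'' => if excluded_middle_informative (b = flip a) then w'' else a :: b :: w''
      | [] => [a]
      end
  end.

Lemma red_fe w : free_eq w (red w).
Proof.
  induction w as [|a w IH]; simpl; [apply fe_refl|].
  apply fe_trans with (a :: red w).
  - apply (fe_app_l [a]). exact IH.
  - destruct (red w) as [|b w'']; [apply fe_refl|].
    destruct excluded_middle_informative as [->|]; [|apply fe_refl].
    apply rst_step. exists [], w'', a. simpl. split; reflexivity.
Qed.

Lemma red_in w x : In x (red w) -> In x w.
Proof.
  induction w as [|a w IH]; simpl; [auto|].
  destruct (red w) as [|b w'']; simpl.
  - intros [H|[]]; auto.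
  - destruct excluded_middle_informative.
    + intro H. right. apply IH. simpl. auto.
    + simpl. intros [H|H]; auto.
Qed.

Lemma reduced_nil : reduced (@nil ltr).
Proof. intros p q a H. destruct p; discriminate. Qed.
Lemma reduced_tail a (w : list ltr) : reduced (a :: w) -> reduced w.
Proof. intros Hr p q x H. apply (Hr (a :: p) q x). rewrite H. reflexivity. Qed.
Lemma reduced_cons a (w : list ltr) :
  reduced w -> (forall b w', w = b :: w' -> b <> flip a) -> reduced (a :: w).
Proof.
  intros Hr Hb p q x H. destruct p as [|y p]; simpl in H.
  - injection H as -> ->. apply (Hb (flip x) q); reflexivity.
  - injection H as -> H. apply (Hr p q x H).
Qed.

Lemma red_reduced w : reduced (red w).
Proof.
  induction w as [|a w IH]; simpl; [apply reduced_nil|].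
  destruct (red w) as [|b w''].
  - apply reduced_cons; [apply reduced_nil|]. intros b w' H; discriminate.
  - destruct excluded_middle_informative as [E|E].
    + eapply reduced_tail. exact IH.
    + apply reduced_cons; [exact IH|]. intros b' w' H. injection H as -> ->. exact E.
Qed.

Definition fillable (S : list G) (Rl : list (list ltr)) (u : list ltr) (k : nat) : Prop :=
  exists l : list (list ltr * list ltr * bool),
    (length l <= k)%nat /\
    (forall v r b, In (v, r, b) l -> word_on S v /\ reduced v /\ In r Rl) /\
    free_eq u (conj_prod l).

Lemma conj_prod_app (l1 l2 : list (list ltr * list ltr * bool)) :
  conj_prod (l1 ++ l2) = conj_prod l1 ++ conj_prod l2.
Proof. unfold conj_prod. rewrite map_app, concat_app. reflexivity. Qed.

Lemma fill_nil S Rl : fillable S Rl [] 0.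
Proof. exists []. split; [simpl; lia|]. split; [intros v0 r b []|apply fe_refl]. Qed.

Lemma fill_mono S Rl u k k' : fillable S Rl u k -> (k <= k')%nat -> fillable S Rl u k'.
Proof. intros (l & H1 & H2 & H3) Hk. exists l. split; [lia|split; assumption]. Qed.

Lemma fill_fe S Rl u v k : free_eq u v -> fillable S Rl u k -> fillable S Rl v k.
Proof.
  intros Huv (l & H1 & H2 & H3). exists l. split; [assumption|split; [assumption|]].
  eapply fe_trans; [apply fe_sym; exact Huv|exact H3].
Qed.

Lemma fill_app S Rl u v k m :
  fillable S Rl u k -> fillable S Rl v m -> fillable S Rl (u ++ v) (k + m).
Proof.
  intros (l1 & A1 & B1 & C1) (l2 & A2 & B2 & C2). exists (l1 ++ l2). split; [|split].
  - rewrite length_app. lia.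
  - intros v1 r b H. apply in_app_or in H. destruct H; [eapply B1|eapply B2]; eauto.
  - rewrite conj_prod_app. apply fe_app; assumption.
Qed.

Lemma fill_rel S Rl u : In u Rl -> fillable S Rl u 1.
Proof.
  intro H. exists [([], u, false)]. split; [simpl; lia|split].
  - intros v r b [E|[]]. injection E as <- <- <-.
    split; [apply word_on_nil|split; [apply reduced_nil|exact H]].
  - unfold conj_prod. simpl. rewrite !app_nil_r. apply fe_refl.
Qed.

Lemma fe_conj (v v' R : list ltr) :
  free_eq v v' -> free_eq (v ++ R ++ inv_word v) (v' ++ R ++ inv_word v').
Proof. intro H. apply fe_app; [exact H|]. apply fe_app_l. apply fe_inv. exact H. Qed.

Lemma fill_conj S Rl u k p :
  word_on S p -> fillable S Rl u k -> fillable S Rl (p ++ u ++ inv_word p) k.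
Proof.
  intros Hp (l & A & B & C).
  set (f := fun x : list ltr * list ltr * bool => let '(v, r, b) := x in (red (p ++ v), r, b)).
  exists (map f l). split; [|split].
  - rewrite length_map. exact A.
  - intros v r b H. apply in_map_iff in H. destruct H as [[[v0 r0] b0] [E Hin]].
    simpl in E. injection E as <- <- <-. destruct (B _ _ _ Hin) as (B1 & _ & B3).
    split; [|split; [apply red_reduced|exact B3]].
    intros a Ha. apply red_in in Ha. apply in_app_or in Ha. destruct Ha; auto.
  - apply fe_trans with (p ++ conj_prod l ++ inv_word p).
    + apply fe_app_l. apply fe_app_r. exact C.
    + clear A B C. induction l as [|[[v r] b] l IH].
      * simpl. unfold conj_prod. simpl. apply fe_cancel.
      * unfold conj_prod in *. simpl map. simpl concat.
        set (R := if b then inv_word r else r) in *.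
        apply fe_trans with (((p ++ v) ++ R ++ inv_word (p ++ v)) ++
                             (p ++ concat (map (fun x : list ltr * list ltr * bool =>
                 let '(v, r, b) := x in v ++ (if b then inv_word r else r) ++ inv_word v) l)
                             ++ inv_word p)).
        -- rewrite inv_word_app. rewrite <- !app_assoc.
           apply fe_sym. apply fe_app_l. apply fe_app_l. apply fe_app_l. apply fe_app_l.
           exact (fe_cancel_mid' [] p _).
        -- apply fe_app; [|exact IH]. simpl. apply fe_conj. apply red_fe.
Qed.


Lemma cancel_l (w y : list ltr) : free_eq (w ++ inv_word w ++ y) y.
Proof. exact (fe_cancel_mid [] w y). Qed.
Lemma cancel_l' (w y : list ltr) : free_eq (inv_word w ++ w ++ y) y.
Proof. exact (fe_cancel_mid' [] w y). Qed.

Section Ladder.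
Context (SS : list G) (Rl : list (list ltr)) (K : nat) (p : G -> nat -> G)
  (N : G -> nat) (sig : G -> list G).
Context (Hp0 : forall g, p g 0%nat = one)
  (HpN : forall g k, (N g <= k)%nat -> p g k = g)
  (Hstep : forall g k, In (mul (inv (p g k)) (p g (Datatypes.S k))) SS)
  (Hsig : forall h, (forall s, In s (sig h) -> In s SS) /\ prodG mul one (sig h) = h)
  (Hsig1 : sig one = [])
  (HN1 : N one = 0%nat)
  (Hrung : forall g a k, In (fst a) SS ->
     (length (sig (mul (inv (p g k)) (p (mul g (eval_letter inv a)) k))) <= K)%nat)
  (HRl : forall u, word_on SS u -> (length u <= 2 * K + 2)%nat ->
     eval_word mul one inv u = one -> In u Rl).

Notation ev := (eval_word mul one inv).

Definition stp g k := mul (inv (p g k)) (p g (Datatypes.S k)).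
Definition Xw g k : list ltr := if Nat.ltb k (N g) then [(stp g k, false)] else [].
Definition Pw g k : list ltr := concat (map (Xw g) (seq 0 k)).
Definition gw g := Pw g (N g).
Definition rho g g' k : list ltr := pos_word (sig (mul (inv (p g k)) (p g' k))).

Lemma Pw_S g k : Pw g (Datatypes.S k) = Pw g k ++ Xw g k.
Proof. unfold Pw. rewrite seq_S, map_app, concat_app. simpl. rewrite app_nil_r. reflexivity. Qed.

Lemma Xw_big g k : (N g <= k)%nat -> Xw g k = [].
Proof. intro H. unfold Xw. destruct (Nat.ltb_spec k (N g)); [lia|reflexivity]. Qed.

Lemma Pw_stable g k : (N g <= k)%nat -> Pw g k = gw g.
Proof.
  intro H. replace k with (N g + (k - N g))%nat by lia. generalize (k - N g)%nat as j.
  induction j as [|j IH]. { rewrite Nat.add_0_r. reflexivity. }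
  rewrite Nat.add_succ_r, Pw_S, Xw_big by lia. rewrite app_nil_r. exact IH.
Qed.

Lemma ev_Xw g k : ev (Xw g k) = stp g k.
Proof.
  unfold Xw. destruct (Nat.ltb_spec k (N g)).
  - simpl. apply mulg1.
  - simpl. unfold stp. rewrite !HpN by lia. symmetry. apply mulVg.
Qed.

Lemma ev_Pw g k : ev (Pw g k) = p g k.
Proof.
  induction k as [|k IH].
  - simpl. rewrite Hp0. reflexivity.
  - rewrite Pw_S, eval_app, IH, ev_Xw. unfold stp.
    rewrite mul_assoc, mulgV, mul1g. reflexivity.
Qed.

Lemma ev_gw g : ev (gw g) = g.
Proof. unfold gw. rewrite ev_Pw. apply HpN. lia. Qed.

Lemma gw_one : gw one = [].
Proof. unfold gw. rewrite HN1. reflexivity. Qed.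

Lemma word_on_Xw g k : word_on SS (Xw g k).
Proof.
  unfold Xw. destruct (Nat.ltb k (N g)); [|apply word_on_nil].
  intros a [<-|[]]. simpl. apply Hstep.
Qed.
Lemma length_Xw g k : (length (Xw g k) <= 1)%nat.
Proof. unfold Xw. destruct (Nat.ltb k (N g)); simpl; lia. Qed.

Lemma word_on_Pw g k : word_on SS (Pw g k).
Proof.
  induction k as [|k IH]; [apply word_on_nil|]. rewrite Pw_S. apply word_on_app; [exact IH|apply word_on_Xw].
Qed.

Lemma word_on_rho g g' k : word_on SS (rho g g' k).
Proof. apply word_on_pos. apply Hsig. Qed.
Lemma ev_rho g g' k : ev (rho g g' k) = mul (inv (p g k)) (p g' k).
Proof. unfold rho. rewrite eval_pos. apply Hsig. Qed.

Lemma ladder g a k : In (fst a) SS ->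
  fillable SS Rl (Pw g k ++ rho g (mul g (eval_letter inv a)) k ++
                  inv_word (Pw (mul g (eval_letter inv a)) k)) k.
Proof.
  intro Ha. set (g' := mul g (eval_letter inv a)).
  induction k as [|k IH].
  - unfold rho. simpl. rewrite Hp0, Hp0, mulVg, Hsig1. simpl. apply fill_nil.
  - set (c := inv_word (rho g g' k) ++ Xw g k ++ rho g g' (Datatypes.S k) ++ inv_word (Xw g' k)).
    assert (Hc : fillable SS Rl c 1).
    { apply fill_rel. apply HRl.
      - unfold c. repeat apply word_on_app; try apply word_on_inv;
          try apply word_on_rho; apply word_on_Xw.
      - unfold c. rewrite !length_app, !inv_word_length.
        pose proof (length_Xw g k). pose proof (length_Xw g' k).
        pose proof (Hrung g a k Ha). pose proof (Hrung g a (Datatypes.S k) Ha).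
        unfold rho. rewrite !pos_word_length. fold g' in H1, H2. lia.
      - unfold c. rewrite !eval_app, !eval_inv, !ev_Xw, !ev_rho. unfold stp.
        rewrite !inv_ab. rewrite !mul_cancel. apply mulVg. }
    pose proof (fill_app _ _ _ _ _ _ IH (fill_conj _ _ _ _ (Pw g' k) (word_on_Pw g' k) Hc)) as H.
    replace (k + 1)%nat with (Datatypes.S k) in H by lia.
    eapply fill_fe; [|exact H].
    rewrite !Pw_S, !inv_word_app. unfold c. rewrite <- !app_assoc.
    apply fe_app_l. eapply fe_trans; [apply fe_app_l; apply cancel_l'|]. apply cancel_l.
Qed.

Definition strip_cost g (a : ltr) : nat := (Nat.max (N g) (N (mul g (eval_letter inv a))) + 1)%nat.

Lemma strip g a : In (fst a) SS ->
  fillable SS Rl (gw g ++ [a] ++ inv_word (gw (mul g (eval_letter inv a)))) (strip_cost g a).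
Proof.
  intro Ha. set (g' := mul g (eval_letter inv a)).
  set (m := Nat.max (N g) (N g')).
  pose proof (ladder g a m Ha) as HL. fold g' in HL.
  rewrite !Pw_stable in HL by (unfold m; lia).
  set (c := inv_word (rho g g' m) ++ [a]).
  assert (Hc : fillable SS Rl c 1).
  { apply fill_rel. apply HRl.
    - unfold c. apply word_on_app; [apply word_on_inv, word_on_rho|].
      intros b [<-|[]]. exact Ha.
    - unfold c. rewrite length_app, inv_word_length. unfold rho. rewrite pos_word_length.
      pose proof (Hrung g a m Ha). fold g' in H. simpl. lia.
    - unfold c. rewrite eval_app, eval_inv, ev_rho. rewrite !HpN by (unfold m; lia).
      unfold g'. simpl. rewrite mulg1, inv_ab, <- mul_assoc. apply mulVg. }
  pose proof (fill_app _ _ _ _ _ _ HL (fill_conj _ _ _ _ (gw g') (word_on_Pw g' _) Hc)) as H.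
  eapply fill_fe; [|exact H].
  unfold c. rewrite <- !app_assoc.
  apply fe_app_l. eapply fe_trans; [apply fe_app_l; apply cancel_l'|]. apply cancel_l.
Qed.

Fixpoint tcost g (u : list ltr) : nat :=
  match u with
  | [] => 0%nat
  | a :: u' => (strip_cost g a + tcost (mul g (eval_letter inv a)) u')%nat
  end.

Lemma fill_word u : forall pre k, word_on SS u ->
  fillable SS Rl (pre ++ inv_word (gw (ev pre))) k ->
  fillable SS Rl (pre ++ u ++ inv_word (gw (ev (pre ++ u)))) (k + tcost (ev pre) u).
Proof.
  induction u as [|a u IH]; intros pre k Hu H.
  - simpl. rewrite !app_nil_r, Nat.add_0_r. exact H.
  - simpl tcost.
    assert (Ha : In (fst a) SS) by (apply Hu; left; reflexivity).
    assert (Hu' : word_on SS u) by (intros b Hb; apply Hu; right; exact Hb).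
    pose proof (fill_app _ _ _ _ _ _ H (strip (ev pre) a Ha)) as H1.
    assert (E : ev (pre ++ [a]) = mul (ev pre) (eval_letter inv a)).
    { rewrite eval_app. simpl. rewrite mulg1. reflexivity. }
    assert (H2 : fillable SS Rl ((pre ++ [a]) ++ inv_word (gw (ev (pre ++ [a]))))
                   (k + strip_cost (ev pre) a)).
    { eapply fill_fe; [|exact H1]. rewrite E. rewrite <- !app_assoc.
      apply fe_app_l. apply cancel_l'. }
    pose proof (IH (pre ++ [a]) _ Hu' H2) as H3.
    rewrite E, <- !app_assoc in H3. simpl in H3. rewrite Nat.add_assoc. exact H3.
Qed.

Lemma fill_loop u : word_on SS u -> ev u = one -> fillable SS Rl u (tcost one u).
Proof.
  intros Hu He.
  pose proof (fill_word u [] 0%nat Hu) as H. simpl in H.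
  rewrite gw_one in H. simpl in H. rewrite He, gw_one in H. simpl in H.
  rewrite app_nil_r in H. apply H. apply fill_nil.
Qed.

End Ladder.
End Alg.

Section Geo.
Context {X : Type} (d : X -> X -> R) (Hm : is_metric d) (Hcat : CAT0 d).

Lemma d_nonneg x y : 0 <= d x y. Proof. apply (proj1 Hm). Qed.
Lemma d_refl x : d x x = 0. Proof. apply (proj1 (proj2 Hm)). reflexivity. Qed.
Lemma d_sym x y : d x y = d y x. Proof. apply (proj1 (proj2 (proj2 Hm))). Qed.
Lemma d_tri x y z : d x z <= d x y + d y z. Proof. apply (proj2 (proj2 (proj2 Hm))). Qed.

Lemma geo_d0 x y gam s : geodesic_from d x y gam -> 0 <= s <= d x y -> d x (gam s) = s.
Proof.
  intros (H0 & H1 & H2) Hs. pose proof (d_nonneg x y).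
  rewrite <- H0 at 1. rewrite H2 by lra. rewrite Rabs_left1 by lra. lra.
Qed.

Lemma geo_dd x y gam s t : geodesic_from d x y gam -> 0 <= s <= d x y -> 0 <= t <= d x y ->
  d (gam s) (gam t) = Rabs (s - t).
Proof. intros (H0 & H1 & H2) Hs Ht. apply H2; assumption. Qed.

Lemma sqrt_sq x : 0 <= x -> sqrt (x ^ 2) = x.
Proof. intro H. apply sqrt_pow2. exact H. Qed.

Lemma cat_ineq A B C gam t : geodesic_from d B C gam -> 0 < d B C -> 0 <= t <= d B C ->
  d A (gam t) ^ 2 <= d A B ^ 2 + t ^ 2 - t * (d B C ^ 2 + d A B ^ 2 - d A C ^ 2) / d B C.
Proof.
  intros Hg Ha Ht.
  set (a := d B C) in *. set (b := d A C). set (c := d A B).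
  assert (Tb : b <= c + a) by (unfold a, b, c; apply d_tri).
  assert (Ta : a <= c + b) by (unfold a, b, c; pose proof (d_tri B A C); rewrite (d_sym B A) in *; lra).
  assert (Tc : c <= b + a) by (unfold a, b, c; pose proof (d_tri A C B); rewrite (d_sym C B) in *; lra).
  assert (Hc0 : 0 <= c) by apply d_nonneg. assert (Hb0 : 0 <= b) by apply d_nonneg.
  set (u := (a ^ 2 + c ^ 2 - b ^ 2) / (2 * a)).
  assert (Hu : 2 * a * u = a ^ 2 + c ^ 2 - b ^ 2) by (unfold u; field; lra).
  assert (Hu1 : u <= c) by nra.
  assert (Hu2 : - c <= u) by nra.
  assert (Hv0 : 0 <= c ^ 2 - u ^ 2) by nra.
  set (v := sqrt (c ^ 2 - u ^ 2)).
  assert (Hv : v ^ 2 = c ^ 2 - u ^ 2) by (unfold v; rewrite <- Rsqr_pow2; apply Rsqr_sqrt; exact Hv0).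
  assert (HgB : gam 0 = B) by apply Hg.
  assert (HBt : d B (gam t) = t) by (apply (geo_d0 B C gam t Hg Ht)).
  assert (Hmain := Hcat A B C gam Hg t Ht (u, v) (0, 0) (a, 0) (t, 0)).
  assert (E1 : eucl (u, v) (0, 0) = c).
  { unfold eucl; cbn [fst snd]. replace ((u - 0) ^ 2 + (v - 0) ^ 2) with (c ^ 2) by nra. apply sqrt_sq; lra. }
  assert (E2 : eucl (0, 0) (a, 0) = a).
  { unfold eucl; cbn [fst snd]. replace ((0 - a) ^ 2 + (0 - 0) ^ 2) with (a ^ 2) by ring. apply sqrt_sq; lra. }
  assert (E3 : eucl (u, v) (a, 0) = b).
  { unfold eucl; cbn [fst snd]. replace ((u - a) ^ 2 + (v - 0) ^ 2) with (b ^ 2) by nra. apply sqrt_sq; lra. }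
  assert (E4 : eucl (0, 0) (t, 0) = t).
  { unfold eucl; cbn [fst snd]. replace ((0 - t) ^ 2 + (0 - 0) ^ 2) with (t ^ 2) by ring. apply sqrt_sq; lra. }
  assert (Hseg : on_segment (0, 0) (a, 0) (t, 0)).
  { exists (t / a). split.
    - unfold Rdiv; split; [apply Rmult_le_pos; [lra|left; apply Rinv_0_lt_compat; lra]|]. apply Rmult_le_reg_r with a; [lra|]. rewrite Rmult_assoc, Rinv_l by lra. lra.
    - simpl. f_equal; field; lra. }
  specialize (Hmain E1 E2 E3 Hseg (eq_trans E4 (eq_sym HBt))).
  unfold eucl in Hmain; cbn [fst snd] in Hmain.
  assert (HQ : 0 <= (u - t) ^ 2 + (v - 0) ^ 2) by (pose proof (pow2_ge_0 (u - t)); pose proof (pow2_ge_0 (v - 0)); lra).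
  assert (Hs := sqrt_sqrt _ HQ).
  assert (Hd0 : 0 <= d A (gam t)) by apply d_nonneg.
  assert (Hs0 := sqrt_pos ((u - t) ^ 2 + (v - 0) ^ 2)).
  assert (Hsq : d A (gam t) ^ 2 <= (u - t) ^ 2 + (v - 0) ^ 2) by nra.
  replace (t * (a ^ 2 + c ^ 2 - b ^ 2) / a) with (2 * u * t) by (rewrite <- Hu; field; lra).
  nra.
Qed.


Lemma sq_le_le x y : 0 <= x -> 0 <= y -> x ^ 2 <= y ^ 2 -> x <= y.
Proof. intros Hx Hy H. destruct (Rle_lt_dec x y) as [|Hlt]; [assumption|]. nra. Qed.

Lemma prop_lemma x0 y y' gam gam' lam :
  geodesic_from d x0 y gam -> geodesic_from d x0 y' gam' -> 0 <= lam <= 1 ->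
  d (gam (lam * d x0 y)) (gam' (lam * d x0 y')) <= lam * d y y'.
Proof.
  intros Hg Hg' Hl.
  set (L := d x0 y) in *. set (L' := d x0 y'). set (del := d y y').
  assert (HL0 : 0 <= L) by apply d_nonneg. assert (HL0' : 0 <= L') by apply d_nonneg.
  assert (Hdel : 0 <= del) by apply d_nonneg.
  assert (T1 : L' <= L + del) by (apply d_tri).
  assert (T2 : L <= L' + del) by (unfold L, L', del; pose proof (d_tri x0 y' y); rewrite (d_sym y' y) in *; lra).
  assert (Hgam0 : gam 0 = x0) by apply Hg. assert (Hgam0' : gam' 0 = x0) by apply Hg'.
  destruct (Req_dec L 0) as [E|HL].
  - rewrite E, Rmult_0_r, Hgam0. rewrite (geo_d0 x0 y' gam' _ Hg') by (fold L'; split; nra). nra.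
  - destruct (Req_dec L' 0) as [E'|HL'].
    + rewrite E', Rmult_0_r, Hgam0', d_sym. rewrite (geo_d0 x0 y gam _ Hg) by (fold L; split; nra). nra.
    + set (t := lam * L). set (s := lam * L').
      assert (Ht : 0 <= t <= L) by (unfold t; split; nra).
      assert (Hs : 0 <= s <= L') by (unfold s; split; nra).
      assert (Hpt : d x0 (gam t) = t) by (apply (geo_d0 x0 y gam t Hg Ht)).
      pose proof (cat_ineq y' x0 y gam t Hg ltac:(fold L; lra) Ht) as C1.
      pose proof (cat_ineq (gam t) x0 y' gam' s Hg' ltac:(fold L'; lra) Hs) as C2.
      fold L L' in C1, C2. rewrite (d_sym y' x0), (d_sym y' y) in C1. fold L' del in C1.
      rewrite (d_sym (gam t) x0), Hpt, (d_sym (gam t) y') in C2.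
      set (e := d y' (gam t)) in *.
      replace (t * (L ^ 2 + L' ^ 2 - del ^ 2) / L) with (lam * (L ^ 2 + L' ^ 2 - del ^ 2)) in C1
        by (unfold t; field; lra).
      replace (s * (L' ^ 2 + t ^ 2 - e ^ 2) / L') with (lam * (L' ^ 2 + t ^ 2 - e ^ 2)) in C2
        by (unfold s; field; lra).
      assert (C3 : lam * e ^ 2 <= lam * (L' ^ 2 + t ^ 2 - lam * (L ^ 2 + L' ^ 2 - del ^ 2)))
        by (apply Rmult_le_compat_l; lra).
      apply sq_le_le; [apply d_nonneg|nra|].
      unfold t, s in *. nra.
Qed.

Lemma min_bound lam M L : 0 <= lam <= 1 -> 0 <= L <= M ->
  Rabs (Rmin (lam * M) L - lam * L) <= M - L.
Proof.
  intros Hl HL. unfold Rmin. destruct (Rle_dec (lam * M) L).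
  - rewrite Rabs_right by nra. nra.
  - rewrite Rabs_right by nra. nra.
Qed.

Lemma fellow x0 y y' gam gam' t :
  geodesic_from d x0 y gam -> geodesic_from d x0 y' gam' -> 0 <= t ->
  d (gam (Rmin t (d x0 y))) (gam' (Rmin t (d x0 y'))) <= 2 * d y y'.
Proof.
  intros Hg Hg' Ht.
  set (L := d x0 y) in *. set (L' := d x0 y'). set (del := d y y').
  assert (HL0 : 0 <= L) by apply d_nonneg. assert (HL0' : 0 <= L') by apply d_nonneg.
  assert (Hdel : 0 <= del) by apply d_nonneg.
  assert (T1 : L' <= L + del) by (apply d_tri).
  assert (T2 : L <= L' + del) by (unfold L, L', del; pose proof (d_tri x0 y' y); rewrite (d_sym y' y) in *; lra).
  set (M := Rmax L L').
  assert (HM1 : L <= M) by apply Rmax_l. assert (HM2 : L' <= M) by apply Rmax_r.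
  assert (HM3 : M = L \/ M = L') by (unfold M, Rmax; destruct Rle_dec; auto).
  destruct (Rle_lt_dec M t) as [HtM|HtM].
  - rewrite !Rmin_right by lra. replace (gam L) with y by (symmetry; apply Hg).
    replace (gam' L') with y' by (symmetry; apply Hg'). fold del. lra.
  - set (lam := t / M).
    assert (HMp : 0 < M) by lra.
    assert (Hlam : 0 <= lam <= 1).
    { unfold lam. split.
      - unfold Rdiv. apply Rmult_le_pos; [lra|left; apply Rinv_0_lt_compat; lra].
      - apply Rmult_le_reg_r with M; [lra|]. unfold Rdiv. rewrite Rmult_assoc, Rinv_l by lra. lra. }
    assert (Et : t = lam * M) by (unfold lam; field; lra).
    pose proof (prop_lemma x0 y y' gam gam' lam Hg Hg' Hlam) as P. fold L L' del in P.
    pose proof (min_bound lam M L Hlam (conj HL0 HM1)) as B1.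
    pose proof (min_bound lam M L' Hlam (conj HL0' HM2)) as B2.
    rewrite <- Et in B1, B2.
    assert (R1 : d (gam (Rmin t L)) (gam (lam * L)) = Rabs (Rmin t L - lam * L)).
    { apply (geo_dd x0 y gam _ _ Hg); fold L; [split; [apply Rmin_glb; lra|apply Rmin_r]|split; nra]. }
    assert (R2 : d (gam' (lam * L')) (gam' (Rmin t L')) = Rabs (lam * L' - Rmin t L')).
    { apply (geo_dd x0 y' gam' _ _ Hg'); fold L'; [split; nra|split; [apply Rmin_glb; lra|apply Rmin_r]]. }
    rewrite Rabs_minus_sym in R2.
    pose proof (d_tri (gam (Rmin t L)) (gam (lam * L)) (gam' (Rmin t L'))).
    pose proof (d_tri (gam (lam * L)) (gam' (lam * L')) (gam' (Rmin t L'))).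
    assert (lam * del <= del) by nra.
    destruct HM3 as [E|E]; rewrite E in B1, B2; nra.
Qed.

Lemma clamp_lip L s t : 0 <= s -> 0 <= t -> 0 <= L ->
  Rabs (Rmin s L - Rmin t L) <= Rabs (s - t).
Proof.
  intros Hs Ht HL. unfold Rmin. destruct (Rle_dec s L), (Rle_dec t L);
  unfold Rabs; repeat destruct Rcase_abs; lra.
Qed.

End Geo.

Notation cid := constructive_indefinite_description.

Lemma sumR_ge (l : list nat) n : In n l -> INR n <= fold_right Rplus 0 (map INR l).
Proof.
  induction l as [|a l IH]; simpl; [intros []|].
  assert (0 <= fold_right Rplus 0 (map INR l)).
  { clear. induction l; simpl; [lra|]. pose proof (pos_INR a). lra. }
  intros [<-|H0]; [lra|]. pose proof (pos_INR a). specialize (IH H0). lra.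
Qed.

Lemma sumN_ge {A} (f : A -> nat) l x : In x l -> (f x <= fold_right plus 0 (map f l))%nat.
Proof. induction l as [|a l IH]; simpl; [intros []|]. intros [<-|H0]; [lia|]. specialize (IH H0). lia. Qed.

Lemma compact_bounded {X} (d : X -> X -> R) (Hm : is_metric d) K x0 :
  compact_set d K -> exists rho, 0 <= rho /\ forall y, K y -> d x0 y <= rho.
Proof.
  intro HK.
  destruct (HK nat (fun n y => d x0 y < INR n)) as [l Hl].
  - intros n x Hx. exists (INR n - d x0 x). split; [lra|].
    intros y Hy. pose proof (d_tri d Hm x0 x y). lra.
  - intros x _. destruct (INR_unbounded (d x0 x)) as [n Hn]. exists n. lra.
  - exists (fold_right Rplus 0 (map INR l)). split.
    + clear. induction l; simpl; [lra|]. pose proof (pos_INR a). lra.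
    + intros y Hy. destruct (Hl y Hy) as [n [Hn Hy']]. pose proof (sumR_ge l n Hn). lra.
Qed.

Section Main.
Context (G : Type) (mul : G -> G -> G) (one : G) (inv : G -> G)
  (HG : is_group mul one inv)
  (X : Type) (x0 : X) (d : X -> X -> R)
  (Hmetric : is_metric d) (Hproper : proper_space d)
  (Hgeod : geodesic_space d) (Hcat : CAT0 d)
  (act : G -> X -> X) (Hact : isometric_action mul one d act)
  (Hpd : properly_discontinuous d act) (Hcc : cocompact d act).

Lemma act1 x : act one x = x. Proof. apply (act_one _ _ _ _ Hact). Qed.
Lemma actM g h x : act (mul g h) x = act g (act h x). Proof. apply (act_mul _ _ _ _ Hact). Qed.
Lemma actI g x y : d (act g x) (act g y) = d x y. Proof. apply (act_isom _ _ _ _ Hact). Qed.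

Lemma dist_step a b : d x0 (act (mul (inv a) b) x0) = d (act a x0) (act b x0).
Proof.
  rewrite <- (actI a). rewrite <- actM, (mul_assoc mul one inv HG), (mulgV mul one inv HG),
    (mul1g mul one inv HG). reflexivity.
Qed.

Lemma rho_exists : exists rho, 0 <= rho /\ forall x, exists h, d (act h x0) x <= rho.
Proof.
  destruct Hcc as [K [HK Hcov]].
  destruct (compact_bounded d Hmetric K x0 HK) as [rho [H0 H1]].
  exists rho. split; [exact H0|]. intro x. destruct (Hcov x) as [h [y [Ky ->]]].
  exists h. rewrite actI. apply H1. exact Ky.
Qed.

Definition rho0 : R := proj1_sig (cid _ rho_exists).
Lemma rho0_pos : 0 <= rho0. Proof. exact (proj1 (proj2_sig (cid _ rho_exists))). Qed.
Lemma near_ex x : exists h, d (act h x0) x <= rho0.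
Proof. exact (proj2 (proj2_sig (cid _ rho_exists)) x). Qed.
Definition nearf (x : X) : G := proj1_sig (cid _ (near_ex x)).
Lemma nearf_spec x : d (act (nearf x) x0) x <= rho0.
Proof. exact (proj2_sig (cid _ (near_ex x))). Qed.

Lemma ball_finite Rr : exists l : list G, forall g, d x0 (act g x0) <= Rr -> In g l.
Proof.
  destruct (Rle_lt_dec 0 Rr) as [HR|HR].
  - destruct (Hpd (fun y => d x0 y <= Rr) (Hproper x0 Rr)) as [l Hl].
    exists l. intros g Hg. apply Hl. exists x0. split; [|exact Hg].
    rewrite (d_refl d Hmetric). exact HR.
  - exists []. intros g Hg. pose proof (d_nonneg d Hmetric x0 (act g x0)). lra.
Qed.

Definition ball Rr : list G :=
  filter (fun g => if Rle_dec (d x0 (act g x0)) Rr then true else false)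
         (proj1_sig (cid _ (ball_finite Rr))).
Lemma ball_spec Rr g : In g (ball Rr) <-> d x0 (act g x0) <= Rr.
Proof.
  unfold ball. rewrite filter_In. split.
  - intros [_ H]. destruct Rle_dec; [assumption|discriminate].
  - intro H. split; [apply (proj2_sig (cid _ (ball_finite Rr))); exact H|].
    destruct Rle_dec; [reflexivity|contradiction].
Qed.

Definition rr : R := 2 * rho0 + 1.
Definition SS : list G := ball rr.
Lemma rr_pos : 0 < rr. Proof. unfold rr. pose proof rho0_pos. lra. Qed.

Lemma SS_inv s : In s SS -> In (inv s) SS.
Proof.
  unfold SS. rewrite !ball_spec. intro H.
  rewrite <- (mulg1 mul one inv HG (inv s)), dist_step, act1, (d_sym d Hmetric). exact H.
Qed.

Lemma letter_in (a : G * bool) : In (fst a) SS -> In (eval_letter inv a) SS.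
Proof. destruct a as [s []]; simpl; [apply SS_inv|auto]. Qed.

Definition gamf (g : G) : R -> X := proj1_sig (cid _ (Hgeod x0 (act g x0))).
Lemma gamf_spec g : geodesic_from d x0 (act g x0) (gamf g).
Proof. exact (proj2_sig (cid _ (Hgeod x0 (act g x0)))). Qed.
Definition Lf g := d x0 (act g x0).
Definition cf g t := gamf g (Rmin t (Lf g)).

Lemma Lf_pos g : 0 <= Lf g. Proof. apply d_nonneg; exact Hmetric. Qed.
Lemma Lf_one : Lf one = 0. Proof. unfold Lf. rewrite act1. apply d_refl; exact Hmetric. Qed.

Lemma cf_0 g : cf g 0 = x0.
Proof. unfold cf. rewrite Rmin_left by apply Lf_pos. apply gamf_spec. Qed.
Lemma cf_end g t : Lf g <= t -> cf g t = act g x0.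
Proof. intro H. unfold cf. rewrite Rmin_right by exact H. apply gamf_spec. Qed.

Definition Nf g : nat :=
  if excluded_middle_informative (g = one) then 0%nat
  else Datatypes.S (nat_min (fun n => Lf g <= INR n)).

Lemma Nf_one : Nf one = 0%nat.
Proof. unfold Nf. destruct excluded_middle_informative; [reflexivity|congruence]. Qed.

Lemma Lf_ex g : exists n, Lf g <= INR n.
Proof. destruct (INR_unbounded (Lf g)) as [n Hn]. exists n. lra. Qed.

Lemma Nf_ge g k : (Nf g <= k)%nat -> Lf g <= INR k.
Proof.
  unfold Nf. destruct excluded_middle_informative as [->|Hne].
  - intros _. rewrite Lf_one. apply pos_INR.
  - intro Hk. destruct (nat_min_spec _ (Lf_ex g)) as [H1 _].
    eapply Rle_trans; [exact H1|]. apply le_INR. lia.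
Qed.

Lemma Nf_le g : INR (Nf g) <= Lf g + 2.
Proof.
  unfold Nf. destruct excluded_middle_informative as [->|Hne].
  - simpl. pose proof (Lf_pos one). lra.
  - destruct (nat_min_spec _ (Lf_ex g)) as [H1 H2].
    set (n0 := nat_min (fun n => Lf g <= INR n)) in *.
    rewrite S_INR. destruct n0 as [|m] eqn:E.
    + simpl. pose proof (Lf_pos g). lra.
    + assert (INR m < Lf g).
      { destruct (Rle_lt_dec (Lf g) (INR m)) as [Hle|]; [|assumption].
        specialize (H2 m Hle). lia. }
      rewrite S_INR. lra.
Qed.

Lemma Nf_zero g : Nf g = 0%nat -> g = one.
Proof. unfold Nf. destruct excluded_middle_informative; [auto|discriminate]. Qed.

Definition pf g k : G :=
  match k with
  | O => one
  | Datatypes.S _ => if Nat.leb (Nf g) k then g else nearf (cf g (INR k))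
  end.

Lemma pf_0 g : pf g 0 = one. Proof. reflexivity. Qed.
Lemma pf_N g k : (Nf g <= k)%nat -> pf g k = g.
Proof.
  intro H. destruct k as [|k].
  - simpl. symmetry. apply Nf_zero. lia.
  - simpl. destruct (Nat.leb_spec (Nf g) (Datatypes.S k)); [reflexivity|lia].
Qed.

Lemma pf_near g k : d (act (pf g k) x0) (cf g (INR k)) <= rho0.
Proof.
  destruct k as [|k].
  - simpl. rewrite act1, cf_0, (d_refl d Hmetric). apply rho0_pos.
  - unfold pf. destruct (Nat.leb_spec (Nf g) (Datatypes.S k)) as [H|H].
    + rewrite cf_end by (apply Nf_ge; exact H). rewrite (d_refl d Hmetric). apply rho0_pos.
    + apply nearf_spec.
Qed.

Lemma cf_step g k : d (cf g (INR k)) (cf g (INR (Datatypes.S k))) <= 1.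
Proof.
  unfold cf. pose proof (Lf_pos g). pose proof (pos_INR k).
  rewrite (geo_dd d x0 (act g x0) (gamf g)); [| apply gamf_spec | |].
  - eapply Rle_trans; [apply clamp_lip; try lra; rewrite S_INR; lra|].
    rewrite S_INR. replace (INR k - (INR k + 1)) with (- (1)) by ring.
    rewrite Rabs_Ropp, Rabs_R1. lra.
  - split; [apply Rmin_glb; lra|apply Rmin_r].
  - rewrite S_INR. split; [apply Rmin_glb; lra|apply Rmin_r].
Qed.

Lemma Hstep g k : In (mul (inv (pf g k)) (pf g (Datatypes.S k))) SS.
Proof.
  unfold SS. apply ball_spec. rewrite dist_step.
  pose proof (pf_near g k). pose proof (pf_near g (Datatypes.S k)). pose proof (cf_step g k).
  pose proof (d_tri d Hmetric (act (pf g k) x0) (cf g (INR k)) (act (pf g (Datatypes.S k)) x0)).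
  pose proof (d_tri d Hmetric (cf g (INR k)) (cf g (INR (Datatypes.S k))) (act (pf g (Datatypes.S k)) x0)).
  rewrite (d_sym d Hmetric (cf g (INR (Datatypes.S k)))) in *. unfold rr. lra.
Qed.

Lemma telescope g k :
  prodG mul one (map (fun i => mul (inv (pf g i)) (pf g (Datatypes.S i))) (seq 0 k)) = pf g k.
Proof.
  induction k as [|k IH]; [reflexivity|].
  rewrite seq_S, map_app, (prodG_app mul one inv HG), IH. simpl.
  rewrite (mulg1 mul one inv HG), (mul_assoc mul one inv HG), (mulgV mul one inv HG),
    (mul1g mul one inv HG). reflexivity.
Qed.

Lemma gen g : exists l, (forall s, In s l -> In s SS) /\ prodG mul one l = g.
Proof.
  exists (map (fun i => mul (inv (pf g i)) (pf g (Datatypes.S i))) (seq 0 (Nf g))). split.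
  - intros s Hs. apply in_map_iff in Hs. destruct Hs as [i [<- _]]. apply Hstep.
  - rewrite telescope. apply pf_N. lia.
Qed.

Definition Pd h n := exists l : list G, length l = n /\ (forall s, In s l -> In s SS) /\
  prodG mul one l = mul (inv one) h.

Lemma Pd_ex h : exists n, Pd h n.
Proof.
  destruct (gen h) as [l [H1 H2]]. exists (length l), l. split; [reflexivity|split; [exact H1|]].
  rewrite (inv_one mul one inv HG), (mul1g mul one inv HG). exact H2.
Qed.

Lemma dS_spec h : Pd h (dS mul one inv SS h one) /\ forall m, Pd h m -> (dS mul one inv SS h one <= m)%nat.
Proof. exact (nat_min_spec _ (Pd_ex h)). Qed.

Definition sigf h : list G :=
  match excluded_middle_informative (Pd h (dS mul one inv SS h one)) with
  | left H => proj1_sig (cid _ H)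
  | right _ => []
  end.

Lemma sigf_spec h : length (sigf h) = dS mul one inv SS h one /\
  (forall s, In s (sigf h) -> In s SS) /\ prodG mul one (sigf h) = h.
Proof.
  unfold sigf. destruct excluded_middle_informative as [H|H].
  - destruct (proj2_sig (cid _ H)) as [A [B C]]. split; [exact A|split; [exact B|]].
    rewrite C, (inv_one mul one inv HG), (mul1g mul one inv HG). reflexivity.
  - exfalso. apply H. apply dS_spec.
Qed.

Lemma sigf_one : sigf one = [].
Proof.
  destruct (sigf_spec one) as [A _].
  assert (dS mul one inv SS one one <= 0)%nat.
  { apply dS_spec. exists []. split; [reflexivity|split; [intros s []|]].
    simpl. rewrite (inv_one mul one inv HG), (mul1g mul one inv HG). reflexivity. }
  destruct (sigf one); [reflexivity|simpl in A; lia].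
Qed.

Lemma L_list l : (forall s, In s l -> In s SS) -> d x0 (act (prodG mul one l) x0) <= rr * INR (length l).
Proof.
  induction l as [|s l IH]; intro Hl.
  - simpl. rewrite act1, (d_refl d Hmetric). lra.
  - simpl prodG. rewrite actM. simpl length. rewrite S_INR.
    pose proof (d_tri d Hmetric x0 (act s x0) (act s (act (prodG mul one l) x0))).
    rewrite actI in H.
    assert (Hs : d x0 (act s x0) <= rr) by (apply ball_spec; apply Hl; left; reflexivity).
    assert (IH' := IH (fun t Ht => Hl t (or_intror Ht))). lra.
Qed.

Lemma Lf_dS g : Lf g <= rr * INR (dS mul one inv SS g one).
Proof.
  destruct (sigf_spec g) as [A [B C]]. unfold Lf. rewrite <- C at 1. rewrite <- A. apply L_list. exact B.
Qed.

Definition KK : nat := fold_right plus 0%nat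
  (map (fun h => dS mul one inv SS h one) (ball (2 * rho0 + 2 * rr))).

Lemma Hrung g a k : In (fst a) SS ->
  (length (sigf (mul (inv (pf g k)) (pf (mul g (eval_letter inv a)) k))) <= KK)%nat.
Proof.
  intro Ha. set (e := eval_letter inv a). set (g' := mul g e).
  assert (He : d x0 (act e x0) <= rr) by (apply ball_spec; apply letter_in; exact Ha).
  assert (Hdel : d (act g x0) (act g' x0) <= rr).
  { rewrite <- dist_step. unfold g'. rewrite (mul_assoc mul one inv HG), (mulVg mul one inv HG),
      (mul1g mul one inv HG). exact He. }
  pose proof (fellow d Hmetric Hcat x0 (act g x0) (act g' x0) (gamf g) (gamf g') (INR k)
      (gamf_spec g) (gamf_spec g') (pos_INR k)) as F.
  fold (Lf g) (Lf g') in F. fold (cf g (INR k)) (cf g' (INR k)) in F.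
  destruct (sigf_spec (mul (inv (pf g k)) (pf g' k))) as [A _]. rewrite A.
  apply (sumN_ge (fun h => dS mul one inv SS h one)).
  apply ball_spec. rewrite dist_step.
  pose proof (pf_near g k). pose proof (pf_near g' k).
  pose proof (d_tri d Hmetric (act (pf g k) x0) (cf g (INR k)) (act (pf g' k) x0)).
  pose proof (d_tri d Hmetric (cf g (INR k)) (cf g' (INR k)) (act (pf g' k) x0)).
  rewrite (d_sym d Hmetric (cf g' (INR k))) in *. lra.
Qed.


Definition letters : list (G * bool) := flat_map (fun s => [(s, false); (s, true)]) SS.

Fixpoint words (n : nat) : list (list (G * bool)) :=
  match n with
  | O => [[]]
  | Datatypes.S n => [] :: flat_map (fun a => map (cons a) (words n)) letters
  end.

Lemma words_complete n u : word_on SS u -> (length u <= n)%nat -> In u (words n).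
Proof.
  revert u. induction n as [|n IH]; intros u Hu Hl.
  - destruct u; [left; reflexivity|simpl in Hl; lia].
  - destruct u as [|a u]; [left; reflexivity|]. right. apply in_flat_map. exists a. split.
    + unfold letters. apply in_flat_map. exists (fst a). split; [apply Hu; left; reflexivity|].
      destruct a as [s []]; simpl; auto.
    + apply in_map. apply IH; [intros b Hb; apply Hu; right; exact Hb|simpl in Hl; lia].
Qed.

Lemma words_sound n u : In u (words n) -> word_on SS u.
Proof.
  revert u. induction n as [|n IH]; intros u Hu.
  - destruct Hu as [<-|[]]. apply word_on_nil.
  - destruct Hu as [<-|Hu]; [apply word_on_nil|]. apply in_flat_map in Hu.
    destruct Hu as [a [Ha Hu]]. apply in_map_iff in Hu. destruct Hu as [u' [<- Hu']].
    intros b [<-|Hb]; [|exact (IH u' Hu' b Hb)].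
    unfold letters in Ha. apply in_flat_map in Ha. destruct Ha as [s [Hs Ha]].
    destruct Ha as [<-|[<-|[]]]; exact Hs.
Qed.

Definition Rl : list (list (G * bool)) :=
  filter (fun u => if excluded_middle_informative (eval_word mul one inv u = one) then true else false)
    (words (2 * KK + 2)).

Lemma Rl_spec u : In u Rl -> word_on SS u /\ eval_word mul one inv u = one.
Proof.
  unfold Rl. rewrite filter_In. intros [H1 H2]. split; [exact (words_sound _ _ H1)|].
  destruct excluded_middle_informative; [assumption|discriminate].
Qed.

Lemma HRl u : word_on SS u -> (length u <= 2 * KK + 2)%nat ->
  eval_word mul one inv u = one -> In u Rl.
Proof.
  intros H1 H2 H3. unfold Rl. apply filter_In. split; [apply words_complete; assumption|].
  destruct excluded_middle_informative; [reflexivity|contradiction].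
Qed.

Lemma fill_loop' u : word_on SS u -> eval_word mul one inv u = one ->
  fillable SS Rl u (tcost mul inv Nf one u).
Proof.
  apply (fill_loop mul one inv HG SS Rl KK pf Nf sigf pf_0 pf_N Hstep).
  - intro h. destruct (sigf_spec h) as [_ [B C]]. split; assumption.
  - apply sigf_one.
  - apply Nf_one.
  - apply Hrung.
  - apply HRl.
Qed.

Lemma strip_bound g a : In (fst a) SS ->
  INR (strip_cost mul inv Nf g a) <=
  (rr + 3) * (INR (dS mul one inv SS (mul g (eval_letter inv a)) one) + 1).
Proof.
  intro Ha. set (e := eval_letter inv a). set (g' := mul g e).
  assert (He : d x0 (act e x0) <= rr) by (apply ball_spec; apply letter_in; exact Ha).
  assert (Hdel : d (act g x0) (act g' x0) <= rr).
  { rewrite <- dist_step. unfold g'. rewrite (mul_assoc mul one inv HG), (mulVg mul one inv HG),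
      (mul1g mul one inv HG). exact He. }
  assert (HL : Lf g <= Lf g' + rr).
  { unfold Lf. pose proof (d_tri d Hmetric x0 (act g' x0) (act g x0)).
    rewrite (d_sym d Hmetric (act g' x0)) in H. lra. }
  pose proof (Nf_le g). pose proof (Nf_le g'). pose proof (Lf_dS g').
  pose proof (pos_INR (dS mul one inv SS g' one)). pose proof rr_pos.
  unfold strip_cost. fold e g'. rewrite plus_INR. simpl (INR 1).
  assert (INR (Nat.max (Nf g) (Nf g')) <= Lf g' + rr + 2).
  { destruct (Nat.max_spec (Nf g) (Nf g')) as [[_ E]|[_ E]]; rewrite E; lra. }
  nra.
Qed.

Lemma tcost_bound w : forall g, (forall s, In s w -> In s SS) ->
  INR (tcost mul inv Nf g (pos_word w)) <=
  (rr + 3) * fold_right Rplus 0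
    (map (fun i => INR (dS mul one inv SS (mul g (prodG mul one (firstn i w))) one) + 1)
         (seq 1 (length w))).
Proof.
  induction w as [|s w IH]; intros g Hw.
  - simpl. lra.
  - simpl pos_word. simpl tcost. simpl length. rewrite <- seq_shift. simpl seq. simpl map.
    rewrite map_map. simpl fold_right. rewrite plus_INR.
    pose proof (strip_bound g (s, false) (Hw s (or_introl eq_refl))) as H1. simpl eval_letter in H1.
    specialize (IH (mul g s) (fun t Ht => Hw t (or_intror Ht))).
    simpl firstn. simpl prodG. rewrite (mulg1 mul one inv HG).
    erewrite map_ext; [|intro i; simpl firstn; simpl prodG; rewrite (mul_assoc mul one inv HG); reflexivity].
    change (eval_letter inv (s, false)) with s in *. rewrite Rmult_plus_distr_l. lra.
Qed.

Lemma main_result : exists (S : list G) (Rl : list (list (G * bool))),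
    finite_presentation mul one inv S Rl /\
    exists C : R, 0 < C /\
      forall w : list G, (forall s, In s w -> In s S) -> prodG mul one w = one ->
        INR (Area S Rl (pos_word w)) <= C * radial_sum mul one inv S w.
Proof.
  exists SS, Rl. split.
  - split; [exact SS_inv|split; [exact Rl_spec|split; [exact gen|]]].
    intros u Hu He. destruct (fill_loop' u Hu He) as (l & A & B & C).
    exists (length l), l. split; [reflexivity|split; assumption].
  - exists (rr + 3). split; [pose proof rr_pos; lra|].
    intros w Hw He.
    assert (Hu : word_on SS (pos_word w)) by (apply word_on_pos; exact Hw).
    assert (He' : eval_word mul one inv (pos_word w) = one) by (rewrite eval_pos; exact He).
    destruct (fill_loop' _ Hu He') as (l & A & B & C).
    assert (HA : (Area SS Rl (pos_word w) <= length l)%nat).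
    { apply (nat_min_spec (area_witness SS Rl (pos_word w))).
      - exists (length l), l. split; [reflexivity|split; assumption].
      - exists l. split; [reflexivity|split; assumption]. }
    pose proof (tcost_bound w one Hw) as T.
    apply le_INR in HA. apply le_INR in A.
    unfold radial_sum.
    erewrite map_ext in T; [|intro i; rewrite (mul1g mul one inv HG); reflexivity].
    lra.
Qed.

End Main.

Theorem theorem4p2
  (G : Type) (mul : G -> G -> G) (one : G) (inv : G -> G)
  (HG : is_group mul one inv)
  (X : Type) (x0 : X) (d : X -> X -> R)
  (Hmetric : is_metric d) (Hproper : proper_space d)
  (Hgeod : geodesic_space d) (Hcat : CAT0 d)
  (act : G -> X -> X) (Hact : isometric_action mul one d act)
  (Hpd : properly_discontinuous d act) (Hcc : cocompact d act) :
  exists (S : list G) (Rl : list (list (G * bool))),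
    finite_presentation mul one inv S Rl /\
    exists C : R, 0 < C /\
      forall w : list G, (forall s, In s w -> In s S) -> prodG mul one w = one ->
        INR (Area S Rl (pos_word w)) <= C * radial_sum mul one inv S w.
Proof.
  exact (main_result G mul one inv HG X x0 d Hmetric Hproper Hgeod Hcat act Hact Hpd Hcc).
Qed.
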